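(* For all $n\ge 2$, $|F_n(321,1243)|=n^2-3n+4$.
   Context: A permutation $\pi$ avoids a classical pattern $p\in S_k$ if no subsequence of $\pi$ of length $k$ is order-isomorphic to $p$. A Fishburn permutation is a permutation $\pi=\pi_1\cdots\pi_n$ of $[n]$ for which there are no indices $i<j$ with $\pi_j<\pi_i<\pi_{i+1}$ and $\pi_i=\pi_j+1$. $F_n(\sigma_1,\dots,\sigma_k)$ denotes the set of Fishburn permutations of length $n$ avoiding each of the classical patterns $\sigma_1,\dots,\sigma_k$. *)

(* Defs.v *)
From mathcomp Require Import all_boot all_fingroup.
Set Implicit Arguments.
Unset Strict Implicit.
Unset Printing Implicit Defensive.

(* Permutations of [n] are represented as s : 'S_n acting on {0,...,n-1};
   the one-line notation is pi_(i+1) = (s i) + 1, which preserves order. *)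

Definition contains_pattern (n : nat) (s : 'S_n) (p : seq nat) : bool :=
  [exists idx : (size p).-tuple 'I_n,
    [forall a : 'I_(size p), forall b : 'I_(size p),
       (a < b) ==> (tnth idx a < tnth idx b)] &&
    [forall a : 'I_(size p), forall b : 'I_(size p),
       (s (tnth idx a) < s (tnth idx b)) == (nth 0 p a < nth 0 p b)]].

Definition avoids (n : nat) (s : 'S_n) (p : seq nat) : bool :=
  ~~ contains_pattern s p.

(* Fishburn: no indices i < j with pi_j < pi_i < pi_{i+1} and pi_i = pi_j + 1.
   (i+1 must be a valid position.) *)
Definition fishburn (n : nat) (s : 'S_n) : bool :=
  ~~ [exists i : 'I_n, exists j : 'I_n, exists i1 : 'I_n,
      [&& i1 == i.+1 :> nat, i < j, s j < s i, s i < s i1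
        & (s i : nat) == (s j).+1]].

Definition F_set (n : nat) (pats : seq (seq nat)) : {set 'S_n} :=
  [set s : 'S_n | fishburn s && all (avoids s) pats].

(* Main.v *)
Require Import Defs.
From mathcomp Require Import all_boot all_fingroup zify.
Set Implicit Arguments. Unset Strict Implicit. Unset Printing Implicit Defensive.
Definition fv n (s : 'S_n) (i : nat) : nat :=
  match @insub nat (fun k => k < n) _ i with Some j => val (s j) | None => 0 end.

Lemma fvE n (s : 'S_n) (j : 'I_n) : fv s j = s j.
Proof. by rewrite /fv valK. Qed.

Definition P321 n (f : nat -> nat) := forall i j k, i < j -> j < k -> k < n -> f k < f j -> f j < f i -> False.
Definition P1243 n (f : nat -> nat) := forall i j k l, i < j -> j < k -> k < l -> l < n ->
  f i < f j -> f j < f l -> f l < f k -> False.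
Definition PF n (f : nat -> nat) := forall i j, i.+1 < n -> i < j -> j < n -> f j < f i -> f i < f i.+1 -> f i = (f j).+1 -> False.

Lemma av1243 n (s : 'S_n) : avoids s [:: 1; 2; 4; 3] -> P1243 n (fv s).
Proof.
move=> /negP Hav i j k l Hij Hjk Hkl Hl H1 H2 H3; apply: Hav.
have Hk : k < n by lia. have Hj : j < n by lia. have Hi : i < n by lia.
apply/existsP; exists [tuple Ordinal Hi; Ordinal Hj; Ordinal Hk; Ordinal Hl].
move: H1 H2 H3; rewrite -[i]/(val (Ordinal Hi)) -[j]/(val (Ordinal Hj)) -[k]/(val (Ordinal Hk)) -[l]/(val (Ordinal Hl)) !fvE.
move=> H1 H2 H3.
apply/andP; split; apply/forallP=> a; apply/forallP=> b.
  case: a => [[|[|[|[|//]]]] Ha]; case: b => [[|[|[|[|//]]]] Hb] //=; rewrite /tnth /=; lia.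
case: a => [[|[|[|[|//]]]] Ha]; case: b => [[|[|[|[|//]]]] Hb] //=; rewrite /tnth /=; apply/eqP; lia.
Qed.

Lemma fishPF n (s : 'S_n) : fishburn s -> PF n (fv s).
Proof.
move=> /negP Hf i j Hi1 Hij Hj H1 H2 H3; apply: Hf.
have Hi : i < n by lia.
move: H1 H2 H3; rewrite -[i]/(val (Ordinal Hi)) -[j]/(val (Ordinal Hj)) -[i.+1]/(val (Ordinal Hi1)) !fvE.
move=> H1 H2 H3.
apply/existsP; exists (Ordinal Hi); apply/existsP; exists (Ordinal Hj); apply/existsP; exists (Ordinal Hi1).
rewrite /=; apply/and5P; split => //; apply/eqP; lia.
Qed.

Lemma PFfish n (s : 'S_n) : PF n (fv s) -> fishburn s.
Proof.
move=> H; apply/negP => /existsP [i /existsP [j /existsP [i1 /and5P [/eqP E1 E2 E3 E4 /eqP E5]]]].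
apply: (H i j); rewrite -?E1 ?fvE; try lia; exact: ltn_ord.
Qed.

Lemma P321av n (s : 'S_n) : P321 n (fv s) -> avoids s [:: 3; 2; 1].
Proof.
move=> H; apply/negP => /existsP [t /andP [Hinc Hiso]].
have o0 : 0 < 3 by []. have o1 : 1 < 3 by []. have o2 : 2 < 3 by [].
have I01 := implyP (forallP (forallP Hinc (Ordinal o0)) (Ordinal o1)) isT.
have I12 := implyP (forallP (forallP Hinc (Ordinal o1)) (Ordinal o2)) isT.
have S01 := eqP (forallP (forallP Hiso (Ordinal o1)) (Ordinal o0)).
have S12 := eqP (forallP (forallP Hiso (Ordinal o2)) (Ordinal o1)).
move: I01 I12 S01 S12 => /=.
set a := tnth t _; set b := tnth t _; set c := tnth t _ => I01 I12 S01 S12.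
apply: (H a b c) => //; rewrite ?fvE ?S01 ?S12 //.
Qed.

Lemma P1243av n (s : 'S_n) : P1243 n (fv s) -> avoids s [:: 1; 2; 4; 3].
Proof.
move=> H; apply/negP => /existsP [t /andP [Hinc Hiso]].
have o0 : 0 < 4 by []. have o1 : 1 < 4 by []. have o2 : 2 < 4 by []. have o3 : 3 < 4 by [].
have I01 := implyP (forallP (forallP Hinc (Ordinal o0)) (Ordinal o1)) isT.
have I12 := implyP (forallP (forallP Hinc (Ordinal o1)) (Ordinal o2)) isT.
have I23 := implyP (forallP (forallP Hinc (Ordinal o2)) (Ordinal o3)) isT.
have S01 := eqP (forallP (forallP Hiso (Ordinal o0)) (Ordinal o1)).
have S13 := eqP (forallP (forallP Hiso (Ordinal o1)) (Ordinal o3)).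
have S32 := eqP (forallP (forallP Hiso (Ordinal o3)) (Ordinal o2)).
move: I01 I12 I23 S01 S13 S32 => /=.
set a := tnth t _; set b := tnth t _; set c := tnth t _; set d := tnth t _ => I01 I12 I23 S01 S13 S32.
apply: (H a b c d) => //; rewrite ?fvE ?S01 ?S13 ?S32 //.
Qed.

Definition bnd n (f : nat -> nat) := forall i, i < n -> f i < n.
Definition injn n (f : nat -> nat) := forall i j, i < n -> j < n -> f i = f j -> i = j.
Definition surj n (f : nat -> nat) := forall v, v < n -> exists i, i < n /\ f i = v.
Definition good n f := [/\ bnd n f, injn n f, PF n f, P321 n f & P1243 n f].

Definition g1 y i := if i == 0 then 0 else if i == 1 then y else if i <= y then i - 1 else i.
Definition g2 y i := if i == 0 then 1 else if i == 1 then 0 else if i == 2 then y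
  else if i <= y then i - 1 else i.
Definition g3 a i := if i == 0 then a else if i == 1 then 0 else if i <= a then i - 1 else i.
Definition g4 a w i := if i == 0 then a else if i == 1 then 0 else if i == 2 then w
  else if i <= a + 1 then i - 2 else if i <= w then i - 1 else i.
Definition g5 a c i := if i == 0 then a else if i == 1 then 0 else if i <= c - a + 1 then a + i - 1
  else if i <= c then i - (c - a + 1) else i.

Definition G x y := if x == 0 then g1 y else if x == 1 then g2 y else if y == 0 then g3 x
  else if x < y then g4 x y else g5 y x.

Definition condA n x y := (x < n) && (y < n) && [|| (x == 0) && (1 <= y),
  (x == 1) && ((2 <= y) || (n == 2) && (y == 0)), (2 <= x) && (y == 0),
  (2 <= x) && (x < y) | (2 <= y) && (y + 2 <= x)].

Ltac splitifs := repeat match goal with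
 | H : context [if ?b then _ else _] |- _ => let E := fresh "E" in destruct b eqn:E
 | |- context [if ?b then _ else _] => let E := fresh "E" in destruct b eqn:E
 end.

Ltac goodtac := split; rewrite /bnd /injn /PF /P321 /P1243; intros; splitifs; lia.

Lemma good_g1 n y : 1 <= y -> y < n -> good n (g1 y).
Proof. move=> *; rewrite /g1; goodtac. Qed.
Lemma good_g2 n y : (2 <= y) && (y < n) || (n == 2) && (y == 0) -> good n (g2 y).
Proof. move=> *; rewrite /g2; goodtac. Qed.
Lemma good_g3 n a : 2 <= a -> a < n -> good n (g3 a).
Proof. move=> *; rewrite /g3; goodtac. Qed.
Lemma good_g4 n a w : 2 <= a -> a < w -> w < n -> good n (g4 a w).
Proof. move=> *; rewrite /g4; goodtac. Qed.
Lemma good_g5 n a c : 2 <= a -> a + 2 <= c -> c < n -> good n (g5 a c).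
Proof. move=> *; rewrite /g5; goodtac. Qed.


Lemma good_G n x y : condA n x y -> good n (G x y).
Proof.
rewrite /condA /G => H.
case: ifP => E0. apply: good_g1; lia.
case: ifP => E1. apply: good_g2; lia.
case: ifP => E2. apply: good_g3; lia.
case: ifP => E3. apply: good_g4; lia.
apply: good_g5; lia.
Qed.


Lemma injN n f i j : injn n f -> i < n -> j < n -> i <> j -> f i <> f j.
Proof. by move=> H Hi Hj Hij E; apply: Hij; apply: H. Qed.

Lemma det n r f h :
 bnd n f -> injn n f -> surj n f ->
 (forall i j, r <= i -> i < j -> j < n -> f i < f j) ->
 (forall i j, r <= i -> i < j -> j < n -> h i < h j) ->
 (forall i, r <= i -> i < n -> h i < n) ->
 (forall v, v < n -> (forall j, j < r -> f j <> v) -> exists m, [/\ r <= m, m < n & h m = v]) ->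
 (forall j m, j < r -> r <= m -> m < n -> f j <> h m) ->
 forall i, r <= i -> i < n -> f i = h i.
Proof.
move=> Hb Hi Hs Hf Hh Hhb T1 T2 i.
elim/ltn_ind: i => i IH Hri Hin.
have [m [Hrm Hmn Hm]] : exists m, [/\ r <= m, m < n & h m = f i].
  apply: T1; first exact: Hb.
  move=> j Hj E; have := Hi _ _ (leq_trans Hj (leq_trans Hri (ltnW Hin))) Hin E; lia.
case: (ltngtP m i) => Hmi.
- have E := IH m Hmi Hrm Hmn.
  have := Hi _ _ Hmn Hin (etrans E Hm); lia.
- have [j [Hjn Hj]] := Hs (h i) (Hhb i Hri Hin).
  case: (ltnP j r) => Hjr.
    by case: (T2 j i Hjr Hri Hin).
  case: (ltngtP j i) => Hji.
  + have := IH j Hji Hjr Hjn; have := Hh j i Hjr Hji Hin; lia.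
  + have := Hf i j Hri Hji Hjn; have := Hh i m Hri Hmi Hmn; lia.
  + by rewrite -Hj Hji.
- by rewrite -Hm Hmi.
Qed.


Definition concl n f := exists x y, condA n x y /\ forall i, i < n -> f i = G x y i.

Ltac NE i j := match goal with Hi : injn ?n ?f |- _ =>
  let H := fresh "N" in have H := @injN n f i j Hi ltac:(lia) ltac:(lia) ltac:(lia) end.
Ltac BD i := match goal with Hb : bnd ?n ?f |- _ =>
  let H := fresh "B" in have H := Hb i ltac:(lia) end.

Lemma classI n f : 2 <= n -> bnd n f -> injn n f -> surj n f -> PF n f -> P321 n f -> P1243 n f ->
  f 0 = 0 -> concl n f.
Proof.
move=> Hn Hb Hi Hs HF H3 H4 F0.
have [q [Hq Fq]] := Hs 1 Hn.
have q0 : q <> 0 by move=> E; rewrite E F0 in Fq.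
NE 1 0.
have Hq2 : q <= 2.
  rewrite leqNgt; apply/negP => Hq3.
  NE 1 q. NE 2 0. NE 2 q. NE 1 2. BD 1.
  case: (ltngtP (f 1) (f 2)) => C; last by lia.
  - have [j [Hj Fj]] := Hs (f 1 - 1) ltac:(lia).
    have J0 : j <> 0 by move=> E; move: Fj; rewrite E F0; lia.
    have J1 : j <> 1 by move=> E; move: Fj; rewrite E; lia.
    apply: (HF 1 j); lia.
  - apply: (H3 1 2 q); lia.
have Hinc : forall i j, 2 <= i -> i < j -> j < n -> f i < f j.
  move=> i j Hi2 Hij Hjn.
  NE i j. NE j 0. NE j q.
  case: (ltngtP (f i) (f j)) => C; [done| |lia].
  case: (i =P q) => [E|Hiq]; first by move: C; rewrite E; lia.
  exfalso; apply: (H4 0 q i j); lia.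
BD 1.
exists 0, (f 1); split.
  rewrite /condA; lia.
move=> i Hin; rewrite /G /=.
case: (ltnP i 2) => Hi2.
  by case: i Hi2 Hin => [|[|]] //; rewrite /g1 /=.
apply: (det Hb Hi Hs Hinc) => //.
- rewrite /g1 => *; splitifs; lia.
- rewrite /g1 => *; splitifs; lia.
- move=> v Hv Hnot.
  have := Hnot 0 isT; have := Hnot 1 isT => H1 H0.
  exists (if v < f 1 then v.+1 else v); rewrite /g1; split; splitifs; lia.
- move=> j m Hj Hm Hmn; rewrite /g1.
  case: j Hj => [|[|]] // _; splitifs; lia.
Qed.


Lemma classII1 n f : 2 <= n -> bnd n f -> injn n f -> surj n f -> PF n f -> P321 n f -> P1243 n f ->
  f 0 = 1 -> f 1 = 0 -> concl n f.
Proof.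
move=> Hn Hb Hi Hs HF H3 H4 F0 F1.
case: (n =P 2) => [En|Hn2].
  exists 1, 0; split; first by rewrite /condA En.
  move=> i Hin; rewrite /G /= /g2; move: Hin; rewrite En.
  by case: i => [|[|]].
have [q [Hq Fq]] := Hs 2 ltac:(lia).
have q0 : q <> 0 by move=> E; rewrite E F0 in Fq.
have q1 : q <> 1 by move=> E; rewrite E F1 in Fq.
have Hq3 : q <= 3.
  rewrite leqNgt; apply/negP => Hq4.
  NE 2 q. NE 2 0. NE 2 1. NE 3 q. NE 3 0. NE 3 1. NE 2 3. BD 2.
  case: (ltngtP (f 2) (f 3)) => C; last by lia.
  - have [j [Hj Fj]] := Hs (f 2 - 1) ltac:(lia).
    have J0 : j <> 0 by move=> E; move: Fj; rewrite E F0; lia.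
    have J1 : j <> 1 by move=> E; move: Fj; rewrite E F1; lia.
    have J2 : j <> 2 by move=> E; move: Fj; rewrite E; lia.
    apply: (HF 2 j); lia.
  - apply: (H3 2 3 q); lia.
have Hinc : forall i j, 3 <= i -> i < j -> j < n -> f i < f j.
  move=> i j Hi2 Hij Hjn.
  NE i j. NE j 0. NE j 1. NE j q.
  case: (ltngtP (f i) (f j)) => C; [done| |lia].
  case: (i =P q) => [E|Hiq]; first by move: C; rewrite E; lia.
  exfalso; apply: (H4 1 q i j); lia.
BD 2. NE 2 0. NE 2 1.
exists 1, (f 2); split.
  rewrite /condA; lia.
move=> i Hin; rewrite /G /=.
case: (ltnP i 3) => Hi2.
  by case: i Hi2 Hin => [|[|[|]]] //; rewrite /g2 /=.
apply: (det Hb Hi Hs Hinc) => //.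
- rewrite /g2 => *; splitifs; lia.
- rewrite /g2 => *; splitifs; lia.
- move=> v Hv Hnot.
  have := Hnot 0 isT; have := Hnot 1 isT; have := Hnot 2 isT => H2 H1 H0.
  exists (if v < f 2 then v.+1 else v); rewrite /g2; split; splitifs; lia.
- move=> j m Hj Hm Hmn; rewrite /g2.
  case: j Hj => [|[|[|]]] // _; splitifs; lia.
Qed.

Lemma classII2 n f : 2 <= n -> bnd n f -> injn n f -> surj n f -> PF n f -> P321 n f -> P1243 n f ->
  2 <= f 0 -> f 1 = 0 -> concl n f.
Proof.
move=> Hn Hb Hi Hs HF H3 H4 F0 F1.
move: F0; move Ea: (f 0) => a F0.
BD 0.
have [t [Ht Ft]] := Hs 1 ltac:(lia).
have t0 : t <> 0 by move=> E; rewrite E Ea in Ft; lia.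
have t1 : t <> 1 by move=> E; rewrite E F1 in Ft.
have Htail : forall i j, t <= i -> i < j -> j < n -> f i < f j.
  move=> i j Hi2 Hij Hjn.
  NE i j. NE j 1. NE j t.
  case: (ltngtP (f i) (f j)) => C; [done| |lia].
  case: (i =P t) => [E|Hiq]; first by move: C; rewrite E; lia.
  exfalso; apply: (H4 1 t i j); lia.
have Hbig : forall i, 2 <= i -> i < t -> a < f i.
  move=> i Hi2 Hit.
  NE i 0. NE i 1. NE i t.
  case: (ltngtP a (f i)) => C; [done| |lia].
  exfalso; apply: (H3 0 i t); lia.
have Hmid : forall i j, 2 <= i -> i < j -> j < t -> f i < f j.
  move=> i j Hi2 Hij Hjt.
  NE i j. have Hbj := Hbig j ltac:(lia) Hjt.
  case: (ltngtP (f i) (f j)) => C; [done| |lia].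
  exfalso; apply: (H3 i j t); lia.
case: (ltngtP t 3) => Ht3.
-
  have Et : t = 2 by lia.
  have Htail2 : forall i j, 2 <= i -> i < j -> j < n -> f i < f j.
    by move=> i j *; apply: Htail; lia.
  exists a, 0; split.
    rewrite /condA; lia.
  have -> : G a 0 = g3 a by rewrite /G; repeat case: ifP => ?; try (exfalso; lia).
  move=> i Hin.
  case: (ltnP i 2) => Hi2.
    by case: i Hi2 Hin => [|[|]] //; rewrite /g3 /=.
  apply: (det Hb Hi Hs Htail2) => //.
  + rewrite /g3 => *; splitifs; lia.
  + rewrite /g3 => *; splitifs; lia.
  + move=> v Hv Hnot.
    have := Hnot 0 isT; have := Hnot 1 isT => H1 H0.
    exists (if v < a then v.+1 else v); rewrite /g3; split; splitifs; lia.
  + move=> j m Hj Hm Hmn; rewrite /g3.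
    case: j Hj => [|[|]] // _; splitifs; lia.
-
  have Hu : forall i, 2 <= i -> i <= t - 2 -> f i = a + i - 1.
    elim/ltn_ind => i IH Hi2 Hit.
    have Hi1 := Hmid i i.+1 Hi2 (ltnSn i) ltac:(lia).
    have Hbi := Hbig i Hi2 ltac:(lia).
    BD i.
    have [j [Hj Fj]] := Hs (f i - 1) ltac:(lia).
    case: (ltngtP j i) => Cji.
    + case: j Cji Hj Fj => [|[|j]] Cji Hj Fj.
      * rewrite Ea in Fj.
        case: (i =P 2) => [E|Ei]; first lia.
        have := IH i.-1 ltac:(lia) ltac:(lia) ltac:(lia).
        have := Hmid i.-1 i ltac:(lia) ltac:(lia) ltac:(lia).
        lia.
      * rewrite F1 in Fj; lia.
      * have := IH i.-1 ltac:(lia) ltac:(lia) ltac:(lia).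
        have := Hmid i.-1 i ltac:(lia) ltac:(lia) ltac:(lia).
        have : f j.+2 <= f i.-1.
          case: (j.+2 =P i.-1) => [->//|Hne].
          apply: ltnW; apply: Hmid; lia.
        lia.
    + exfalso; apply: (HF i j); lia.
    + subst j; lia.
  have Hc : f (t - 1) = a + t - 2.
    have Hlt := Hmid (t - 2) (t - 1) ltac:(lia) ltac:(lia) ltac:(lia).
    have Hut := Hu (t - 2) ltac:(lia) ltac:(lia).
    case: (f (t - 1) =P a + t - 2) => // Hne; exfalso.
    BD (t - 1).
    have [j [Hj Fj]] := Hs (a + t - 2) ltac:(lia).
    case: (ltnP t j) => Htj.
      have := Hu 2 ltac:(lia) ltac:(lia).
      move=> ?; apply: (H4 0 2 (t - 1) j); lia.
    have : j = 0 \/ j = 1 \/ (2 <= j <= t - 2) \/ j = t - 1 \/ j = t by lia.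
    case=> [Ej|[Ej|[Ej|[Ej|Ej]]]].
    * by move: Fj; rewrite Ej Ea; lia.
    * by move: Fj; rewrite Ej F1; lia.
    * have := Hu j ltac:(lia) ltac:(lia); lia.
    * by move: Fj; rewrite Ej; lia.
    * by move: Fj; rewrite Ej Ft; lia.
  have Hu' : forall i, 2 <= i -> i < t -> f i = a + i - 1.
    move=> i Hi2 Hit; case: (i =P t - 1) => [->|Hne]; first by rewrite Hc; lia.
    by apply: Hu; lia.
  BD (t - 1).
  exists (a + t - 2), a; split.
    rewrite /condA; lia.
  have -> : G (a + t - 2) a = g5 a (a + t - 2) by rewrite /G; repeat case: ifP => ?; try (exfalso; lia).
  move=> i Hin.
  case: (ltnP i t) => Hit.
    case: i Hit Hin => [|[|i]] Hit Hin; rewrite /g5 /=; [by rewrite Ea | by rewrite F1 |].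
    have := Hu' i.+2 ltac:(lia) Hit; splitifs; lia.
  apply: (det Hb Hi Hs Htail) => //.
  + rewrite /g5 => *; splitifs; lia.
  + rewrite /g5 => *; splitifs; lia.
  + move=> v Hv Hnot.
    have H0 := Hnot 0 ltac:(lia); have H1 := Hnot 1 ltac:(lia).
    rewrite Ea in H0; rewrite F1 in H1.
    have Hr : ~ (a + 1 <= v <= a + t - 2).
      move=> Hr; apply: (Hnot (v - a + 1)); first lia.
      rewrite Hu'; lia.
    exists (if v < a then v + t - 1 else v); rewrite /g5; split; splitifs; lia.
  + move=> j m Hj Hm Hmn; rewrite /g5.
    case: j Hj => [|[|j]] Hj; [rewrite Ea | rewrite F1 | have := Hu' j.+2 ltac:(lia) Hj];
      splitifs; lia.
-
  subst t.
  set w := f 2.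
  have Haw : a < w := Hbig 2 isT isT.
  BD 2.
  exists a, w; split.
    rewrite /condA; lia.
  have -> : G a w = g4 a w by rewrite /G; repeat case: ifP => ?; try (exfalso; lia).
  move=> i Hin.
  case: (ltnP i 3) => Hi2.
    by case: i Hi2 Hin => [|[|[|]]] //; rewrite /g4 /=.
  apply: (det Hb Hi Hs Htail) => //.
  + rewrite /g4 => *; splitifs; lia.
  + rewrite /g4 => *; splitifs; lia.
  + move=> v Hv Hnot.
    have := Hnot 0 isT; have := Hnot 1 isT; have := Hnot 2 isT => H2 H1 H0.
    exists (if v < a then v.+2 else if v < w then v.+1 else v); rewrite /g4; split; splitifs; lia.
  + move=> j m Hj Hm Hmn; rewrite /g4.
    case: j Hj => [|[|[|]]] // _; splitifs; lia.
Qed.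


Lemma classify n f : 2 <= n -> bnd n f -> injn n f -> surj n f -> PF n f -> P321 n f -> P1243 n f ->
  concl n f.
Proof.
move=> Hn Hb Hi Hs HF H3 H4.
NE 0 1.
case: (ltngtP (f 0) (f 1)) => C; last by lia.
- apply: classI => //.
  case: (f 0 =P 0) => // Hne; exfalso.
  BD 0.
  have [j [Hj Fj]] := Hs (f 0 - 1) ltac:(lia).
  have J0 : j <> 0 by move=> E; move: Fj; rewrite E; lia.
  apply: (HF 0 j); lia.
- have F1 : f 1 = 0.
    case: (f 1 =P 0) => // Hne; exfalso.
    have [p [Hp Fp]] := Hs 0 ltac:(lia).
    have p0 : p <> 0 by move=> E; move: Fp; rewrite E; lia.
    have p1 : p <> 1 by move=> E; move: Fp; rewrite E; lia.
    apply: (H3 0 1 p); lia.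
  case: (f 0 =P 1) => E1.
    by apply: classII1.
  apply: classII2 => //; lia.
Qed.

Ltac sl := repeat (first [lia | match goal with
  | H : context [if ?b then _ else _] |- _ => let E := fresh "E" in destruct b eqn:E end]).
Ltac inst E k := try (let H := fresh "e" in have H := E k ltac:(lia)).

Lemma G_inj n x y x' y' : condA n x y -> condA n x' y' ->
  (forall i, i < n -> G x y i = G x' y' i) -> x = x' /\ y = y'.
Proof.
rewrite /condA => Ha Ha'; rewrite /G.
case: (n =P 2) => Hn2.
all: case X0: (x == 0); case X1: (x == 1); case Y0: (y == 0); case XY: (x < y);
  case X0': (x' == 0); case X1': (x' == 1); case Y0': (y' == 0); case XY': (x' < y'); move=> /= E;
  try (exfalso; lia).
all: inst E 0; inst E 1; inst E 2; inst E 3; inst E (x - y + 2); inst E (x' - y' + 2);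
  clear E; unfold g1, g2, g3, g4, g5 in *; simpl in *; sl.
Qed.


Lemma exists_perm n f : bnd n f -> injn n f -> exists s : 'S_n, forall i : 'I_n, (s i : nat) = f i.
Proof.
move=> Hb Hi.
pose h := [ffun i : 'I_n => Ordinal (Hb i (ltn_ord i))].
have hinj : injective h.
  move=> i j /(congr1 val); rewrite !ffunE /= => E.
  apply: val_inj; exact: Hi (ltn_ord i) (ltn_ord j) E.
by exists (perm hinj) => i; rewrite permE ffunE.
Qed.

Definition mkperm n (f : nat -> nat) : 'S_n := odflt 1%g [pick s : 'S_n | [forall i : 'I_n, (s i : nat) == f i]].

Lemma mkpermE n f : bnd n f -> injn n f -> forall i : 'I_n, (mkperm n f i : nat) = f i.
Proof.
move=> Hb Hi; rewrite /mkperm; case: pickP => [s /forallP H|H] /= i.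
  exact/eqP.
have [s Hs] := exists_perm Hb Hi.
move: (H s) => /forallP []; move=> j; exact/eqP.
Qed.

Lemma mkperm_eq n (f : nat -> nat) (s : 'S_n) : (forall i : 'I_n, (s i : nat) = f i) -> mkperm n f = s.
Proof.
move=> Hs; rewrite /mkperm; case: pickP => [s' /forallP H|H] /=.
  apply/permP => i; apply: val_inj => /=; rewrite Hs; exact/eqP.
by move: (H s) => /forallP []; move=> j; apply/eqP.
Qed.

Lemma fvO n (s : 'S_n) i (H : i < n) : fv s i = s (Ordinal H).
Proof. by rewrite -fvE. Qed.

Lemma fv_bnd n (s : 'S_n) : bnd n (fv s).
Proof. move=> i H; rewrite fvO; exact: ltn_ord. Qed.
Lemma fv_inj n (s : 'S_n) : injn n (fv s).
Proof.
move=> i j Hi Hj; rewrite !fvO => /val_inj/perm_inj E.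
by have := congr1 val E.
Qed.
Lemma fv_surj n (s : 'S_n) : surj n (fv s).
Proof.
move=> v Hv; exists ((s^-1)%g (Ordinal Hv)); split; first exact: ltn_ord.
by rewrite fvE permKV.
Qed.

Lemma PF_ext n f g : (forall i, i < n -> f i = g i) -> PF n f -> PF n g.
Proof. move=> E H i j *; apply: (H i j); rewrite ?E //; lia. Qed.
Lemma P321_ext n f g : (forall i, i < n -> f i = g i) -> P321 n f -> P321 n g.
Proof. move=> E H i j k *; apply: (H i j k); rewrite ?E //; lia. Qed.
Lemma P1243_ext n f g : (forall i, i < n -> f i = g i) -> P1243 n f -> P1243 n g.
Proof. move=> E H i j k l *; apply: (H i j k l); rewrite ?E //; lia. Qed.


Lemma sum_iv n lo hi : \sum_(y < n) ((lo <= y) && (y < hi) : nat) = minn hi n - lo.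
Proof.
elim: n => [|n IH]; first by rewrite big_ord0; lia.
rewrite big_ord_recr /= IH; lia.
Qed.

Definition R n x := if x == 0 then n - 1 else if x == 1 then n - 2 + (n == 2) else 1 + (n - x - 1) + (x - 3).

Lemma row n x : 2 <= n -> x < n -> \sum_(y < n) (condA n x y : nat) = R n x.
Proof.
move=> Hn Hx; rewrite /R.
case: ifP => X0.
  rewrite (eq_bigr (fun y : 'I_n => ((1 <= y) && (y < n) : nat))); first by rewrite sum_iv; lia.
  move=> y _; have := ltn_ord y; rewrite /condA; lia.
case: ifP => X1.
  rewrite (eq_bigr (fun y : 'I_n => ((2 <= y) && (y < n) : nat) + ((0 <= y) && (y < (n == 2)) : nat))).
    by rewrite big_split !sum_iv /=; lia.
  move=> y _; have := ltn_ord y; rewrite /condA; lia.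
rewrite (eq_bigr (fun y : 'I_n => ((0 <= y) && (y < 1) : nat) + ((x.+1 <= y) && (y < n) : nat)
   + ((2 <= y) && (y < x - 1) : nat))).
  by rewrite !big_split !sum_iv /=; lia.
move=> y _; have := ltn_ord y; rewrite /condA; lia.
Qed.

Lemma cardA n : 2 <= n -> #|[set p : 'I_n * 'I_n | condA n p.1 p.2]| = n ^ 2 + 4 - 3 * n.
Proof.
move=> Hn.
rewrite -sum1_card big_mkcond /=.
have -> : \sum_(p : 'I_n * 'I_n) (if p \in [set p : 'I_n * 'I_n | condA n p.1 p.2] then 1 else 0)
   = \sum_(x < n) \sum_(y < n) (condA n x y : nat).
  by rewrite pair_bigA; apply: eq_bigr => -[x y] _; rewrite inE /=; case: (condA _ _ _).
rewrite (eq_bigr (fun x : 'I_n => R n x)); last by move=> x _; rewrite row.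
case: n Hn => [|[|m]] // _.
rewrite big_ord_recl big_ord_recl.
rewrite (eq_bigr (fun i : 'I_m => (m - 1) + (i == 0 :> nat))); last first.
  move=> i _; have := ltn_ord i; rewrite /R /= /bump /=; lia.
rewrite big_split /= sum_nat_const card_ord.
rewrite (eq_bigr (fun i : 'I_m => ((0 <= i) && (i < 1) : nat))); last by move=> i _; lia.
rewrite sum_iv /R /=.
case: m => [|m] /=; first by [].
rewrite !expnS expn0; nia.
Qed.


Lemma av321 n (s : 'S_n) : avoids s [:: 3; 2; 1] -> P321 n (fv s).
Proof.
move=> /negP Hav i j k Hij Hjk Hk H1 H2; apply: Hav.
have Hj : j < n by lia. have Hi : i < n by lia.
apply/existsP; exists [tuple Ordinal Hi; Ordinal Hj; Ordinal Hk].
move: H1 H2; rewrite -[i]/(val (Ordinal Hi)) -[j]/(val (Ordinal Hj)) -[k]/(val (Ordinal Hk)) !fvE.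
move=> H1 H2.
apply/andP; split; apply/forallP=> a; apply/forallP=> b.
  case: a => [[|[|[|//]]] Ha]; case: b => [[|[|[|//]]] Hb] //=; rewrite /tnth /=; lia.
case: a => [[|[|[|//]]] Ha]; case: b => [[|[|[|//]]] Hb] //=; rewrite /tnth /=; apply/eqP; lia.
Qed.

Theorem mainTheorem6 (n : nat) : 2 <= n ->
  #|F_set n [:: [:: 3; 2; 1]; [:: 1; 2; 4; 3]]| = n ^ 2 + 4 - 3 * n.
Proof.
move=> Hn.
pose A := [set p : 'I_n * 'I_n | condA n p.1 p.2].
pose Psi := fun p : 'I_n * 'I_n => mkperm n (G p.1 p.2).
have HG : forall p, p \in A -> good n (G p.1 p.2).
  by move=> p; rewrite inE => H; apply: good_G.
have E : F_set n [:: [:: 3; 2; 1]; [:: 1; 2; 4; 3]] = Psi @: A.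
  apply/setP => s; rewrite inE /= andbT.
  apply/idP/imsetP.
  - case/and3P => Hf H321 H1243.
    have [x [y [Hc Hxy]]] := classify Hn (@fv_bnd n s) (@fv_inj n s) (@fv_surj n s) (fishPF Hf)
      (av321 H321) (av1243 H1243).
    have Hx : x < n by move: Hc; rewrite /condA; lia.
    have Hy : y < n by move: Hc; rewrite /condA; lia.
    exists (Ordinal Hx, Ordinal Hy); first by rewrite inE.
    by apply/esym/mkperm_eq => i; rewrite -fvE Hxy.
  - case=> p Hp ->.
    have [Hb Hi HF H3 H4] := HG p Hp.
    have Eq : forall i, i < n -> G p.1 p.2 i = fv (Psi p) i.
      by move=> i Hi'; rewrite fvO mkpermE.
    by rewrite (PFfish (PF_ext Eq HF)) (P321av (P321_ext Eq H3)) (P1243av (P1243_ext Eq H4)).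
rewrite E card_in_imset ?cardA //.
move=> p1 p2 H1 H2 Epq.
have [Hb1 Hi1 _ _ _] := HG p1 H1.
have [Hb2 Hi2 _ _ _] := HG p2 H2.
have EG : forall i, i < n -> G p1.1 p1.2 i = G p2.1 p2.2 i.
  move=> i Hi.
  rewrite -(mkpermE Hb1 Hi1 (Ordinal Hi)) -(mkpermE Hb2 Hi2 (Ordinal Hi)).
  by rewrite /Psi in Epq; rewrite Epq.
rewrite !inE in H1 H2.
have [e1 e2] := G_inj H1 H2 EG.
move: e1 e2; case: p1 {H1 Epq Hb1 Hi1 EG} => [x1 y1]; case: p2 {H2 Hb2 Hi2} => [x2 y2] /= e1 e2.
by congr pair; apply: val_inj.
Qed.
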